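(* Let $N = n+1\ge 3$ and let $\Delta_N$ be the regular unimodular triangulation of $P_{C_N}$ described below. For each cell $T\in\Delta_N$, the associated directed acyclic subnetwork $(\{0,\dots,N-1\},\mathcal{E}(T))$ is primitive, i.e. $\mathcal{E}(T)$ contains exactly $n=N-1$ directed edges.
   Context: $C_N$ is the cycle graph on vertices $0,\dots,N-1$ with edges $\{0,1\},\dots,\{N-2,N-1\},\{N-1,0\}$; $\mathbf{e}_1,\dots,\mathbf{e}_n$ is the standard basis of $\mathbb{R}^n$ with $\mathbf{e}_0=\mathbf{e}_N=\mathbf{0}$; $P_{C_N}=\operatorname{conv}\{\mathbf{e}_i-\mathbf{e}_j\mid\{i,j\}\text{ an edge}\}$. If $N$ is even, let $\Lambda_N=\{\boldsymbol{\lambda}\in\{-1,1\}^N\mid\sum\lambda_i=0\}$, and for $\boldsymbol{\lambda}\in\Lambda_N$ let $\mathbf{v}_0=\mathbf{0}$, $\mathbf{v}_i=\lambda_i(\mathbf{e}_{i-1}-\mathbf{e}_i)$ ($1\le i\le N$), $V=\{\mathbf{v}_0,\dots,\mathbf{v}_N\}$; then $\Delta_N=\{\operatorname{conv}(V\setminus\{\mathbf{v}_i\})\mid\boldsymbol{\lambda}\in\Lambda_N,\ 1\le i\le N,\ \lambda_i=\lambda_1\}$. If $N$ is odd, let $\Lambda_{j,N}=\{\boldsymbol{\lambda}\mid\lambda_j=0,\ \lambda_i\in\{\pm1\}\ (i\ne j),\ \sum\lambda_i=0\}$ and $\Delta_N=\{\operatorname{conv}(\{\mathbf{0}\}\cup\{\lambda_i(\mathbf{e}_{i-1}-\mathbf{e}_i)\mid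 1\le i\le N,\ i\ne j\})\mid\boldsymbol{\lambda}\in\Lambda_{j,N},\ 1\le j\le N\}$. For a cell $T$, $\mathcal{E}(T)=\{(i,j)\mid\{i,j\}\text{ an edge of }C_N,\ \mathbf{e}_i-\mathbf{e}_j\in T\}$ (ordered pairs, i.e. directed edges), and the directed acyclic subnetwork associated with $T$ is the directed graph $(\{0,\dots,N-1\},\mathcal{E}(T))$; it is called primitive if it has exactly $n=N-1$ directed edges. *)

(* Defs.v *)
From HB Require Import structures.
From mathcomp Require Import all_boot all_order all_algebra.
Set Implicit Arguments. Unset Strict Implicit. Unset Printing Implicit Defensive.
Import Order.TTheory GRing.Theory Num.Theory.
Local Open Scope ring_scope.

(* e_k for k = 1..n is the k-th standard basis vector; e_0 = e_N = 0
   (indeed for k = 0 or k = n.+1 no coordinate j < n has j.+1 = k). *)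
Definition evec (R : nzRingType) (n k : nat) : 'rV[R]_n :=
  \row_(j < n) (if k == j.+1 then 1 else 0).

Definition cyc_adj (n : nat) (a b : 'I_n.+1) : bool :=
  ((val b == (val a).+1 %% n.+1) || (val a == (val b).+1 %% n.+1))%N.

Definition in_conv (R : realFieldType) (n : nat) (S : seq 'rV[R]_n)
  (p : 'rV[R]_n) : Prop :=
  exists w : 'I_(size S) -> R,
    [/\ forall i, 0 <= w i, \sum_i w i = 1 & \sum_i w i *: S`_i = p].

(* v_i = lambda_i (e_{i-1} - e_i), for i = 1..N; we index by k = i-1 : 'I_N,
   so v_(k+1) = lambda k (e_k - e_(k+1)). *)
Definition vvec (R : realFieldType) (n : nat) (lam : 'I_n.+1 -> int)
  (k : 'I_n.+1) : 'rV[R]_n :=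
  (lam k)%:~R *: (evec R n k - evec R n k.+1).

Definition cell_pts (R : realFieldType) (n : nat) (lam : 'I_n.+1 -> int)
  (i : 'I_n.+1) : seq 'rV[R]_n :=
  0 :: [seq vvec R lam k | k <- enum 'I_n.+1 & k != i].

(* S is the vertex list generating a cell of Delta_N, N = n.+1.
   Even N: lambda in {-1,1}^N with sum 0, remove v_i with lambda_i = lambda_1
   (lambda_1 is lam ord0). *)
Definition is_cell (R : realFieldType) (n : nat) (S : seq 'rV[R]_n) : Prop :=
  if ~~ odd n.+1 then
    exists (lam : 'I_n.+1 -> int) (i : 'I_n.+1),
      [/\ forall k, lam k = 1 \/ lam k = -1,
          \sum_k lam k = 0,
          lam i = lam ord0 &
          S = cell_pts R lam i]
  else
    exists (lam : 'I_n.+1 -> int) (j : 'I_n.+1),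
      [/\ lam j = 0,
          forall k, k != j -> lam k = 1 \/ lam k = -1,
          \sum_k lam k = 0 &
          S = cell_pts R lam j].

Definition dir_edge_of (R : realFieldType) (n : nat) (S : seq 'rV[R]_n)
  (p : 'I_n.+1 * 'I_n.+1) : Prop :=
  cyc_adj p.1 p.2 /\ in_conv S (evec R n p.1 - evec R n p.2).

(* Main.v *)
Require Import Defs.
From HB Require Import structures.
From mathcomp Require Import all_boot all_order all_algebra.
From mathcomp Require Import zify ring lra.
Import Order.TTheory GRing.Theory Num.Theory.
Local Open Scope ring_scope.
Set Implicit Arguments. Unset Strict Implicit.

Section Aux.
Variables (R : realFieldType) (n : nat).

Definition Lf (c : nat -> R) (x : 'rV[R]_n) : R := \sum_(j < n) x ord0 j * c j.+1.

Lemma Lf_sum c m (w : 'I_m -> R) (F : 'I_m -> 'rV[R]_n) :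
  Lf c (\sum_i w i *: F i) = \sum_i w i * Lf c (F i).
Proof.
rewrite /Lf.
under eq_bigr => j _ do rewrite summxE mulr_suml.
rewrite exchange_big /=; apply: eq_bigr => i _.
rewrite mulr_sumr; apply: eq_bigr => j _; rewrite mxE mulrA.
by [].
Qed.

Lemma Lf_B c x y : Lf c (x - y) = Lf c x - Lf c y.
Proof.
rewrite /Lf -sumrB; apply: eq_bigr => j _; rewrite !mxE mulrBl.
by [].
Qed.

Lemma Lf_Z c a x : Lf c (a *: x) = a * Lf c x.
Proof.
rewrite /Lf mulr_sumr; apply: eq_bigr => j _; rewrite !mxE mulrA.
by [].
Qed.

Lemma Lf_0 c : Lf c 0 = 0.
Proof. by rewrite /Lf big1 // => j _; rewrite mxE mul0r. Qed.

Lemma Lf_evec c k : c 0%N = 0 -> c n.+1 = 0 -> (k <= n.+1)%N ->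
  Lf c (evec R n k) = c k.
Proof.
move=> c0 cN hk; rewrite /Lf.
case: k hk => [|k] hk.
  by rewrite big1 // => j _; rewrite mxE /= mul0r.
have [hkn|hkn] := ltnP k n.
  rewrite (bigD1 (Ordinal hkn)) //= big1 ?addr0.
    by rewrite mxE /= eqxx mul1r.
  move=> j hj; rewrite mxE eqSS.
  have -> : (k == j) = false.
    apply/negbTE; apply: contra hj => /eqP hkj.
    by apply/eqP; apply: val_inj => /=.
  by rewrite mul0r.
have -> : k = n by lia.
rewrite cN big1 // => j _; rewrite mxE eqSS.
have -> : (n == j) = false by apply/negbTE; rewrite neq_ltn ltn_ord orbT.
by rewrite mul0r.
Qed.

Definition uvec (k : nat) : 'rV[R]_n := evec R n k - evec R n k.+1.

Lemma Lf_u c k : c 0%N = 0 -> c n.+1 = 0 -> (k <= n)%N ->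
  Lf c (uvec k) = c k - c k.+1.
Proof.
move=> c0 cN hk; rewrite /uvec Lf_B !Lf_evec //; lia.
Qed.

Lemma evec_modS (a : nat) : (a < n.+1)%N ->
  evec R n (a.+1 %% n.+1) = evec R n a.+1.
Proof.
move=> ha; have [h|h] := ltnP a.+1 n.+1.
  by rewrite modn_small.
have -> : a.+1 = n.+1 by lia.
rewrite modnn; apply/rowP => j; rewrite !mxE.
have -> : (n.+1 == j.+1) = false by rewrite eqSS; apply/negbTE; rewrite neq_ltn ltn_ord orbT.
by [].
Qed.

Lemma conv_le (S : seq 'rV[R]_n) c x (al : R) :
  in_conv S x -> (forall y, y \in S -> Lf c y <= al) -> Lf c x <= al.
Proof.
move=> [w [w0 w1 wx]] hS; rewrite -wx Lf_sum.
apply: le_trans (_ : \sum_i w i * al <= al).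
  apply: ler_sum => i _; apply: ler_wpM2l => //; apply: hS.
  by apply: mem_nth.
by rewrite -mulr_suml w1 mul1r.
Qed.

Lemma mem_conv (S : seq 'rV[R]_n) x : x \in S -> in_conv S x.
Proof.
move=> hx; have hi : (index x S < size S)%N by rewrite index_mem.
exists (fun j : 'I_(size S) => ((j == Ordinal hi) : bool)%:R); split.
- by move=> j; rewrite ler0n.
- by rewrite (bigD1 (Ordinal hi)) //= big1 ?eqxx ?addr0 // => j /negbTE ->.
- rewrite (bigD1 (Ordinal hi)) //= big1 ?eqxx ?addr0 ?scale1r ?nth_index //.
  by move=> j /negbTE ->; rewrite scale0r.
Qed.

Lemma ltS_R (i k : nat) : ((i < k.+1)%N%:R : R) = (i < k)%N%:R + (i == k)%:R.
Proof.
rewrite ltnS leq_eqVlt; case: eqVneq => [->|ne] /=; first by rewrite ltnn add0r.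
by rewrite addr0.
Qed.

End Aux.

Section Core.
Variables (R : realFieldType) (n : nat) (hn : (2 <= n)%N).
Variables (lam : 'I_n.+1 -> int) (i : 'I_n.+1).
Hypothesis H : forall k, k != i -> lam k = 1 \/ lam k = -1.

Lemma lamR k : k != i -> (lam k)%:~R = 1 :> R \/ (lam k)%:~R = -1 :> R.
Proof.
by move=> /H [->|->]; [left; rewrite mulr1z | right; rewrite intrN mulr1z].
Qed.

Lemma Lf_vvec c (k : 'I_n.+1) : c 0%N = 0 -> c n.+1 = 0 ->
  Lf c (vvec R lam k) = (lam k)%:~R * (c k - c k.+1).
Proof.
move=> c0 cN; rewrite /vvec Lf_Z -/(uvec R n k) Lf_u //.
by rewrite -ltnS ltn_ord.
Qed.

Lemma cell_bound c al : 0 <= al ->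
  (forall k, k != i -> Lf c (vvec R lam k) <= al) ->
  forall y, y \in cell_pts R lam i -> Lf c y <= al.
Proof.
move=> al0 hk y; rewrite /cell_pts in_cons => /orP [/eqP ->|].
  by rewrite Lf_0.
move=> /mapP [k]; rewrite mem_filter => /andP [ki _] ->.
exact: hk.
Qed.

Lemma bad (m : 'I_n.+1) (s : R) : (s = 1 \/ s = -1) ->
  in_conv (cell_pts R lam i) (s *: uvec R n m) ->
  m != i /\ s = (lam m)%:~R.
Proof.
move=> hs hc.
have hm : (m <= n)%N by rewrite -ltnS ltn_ord.
case: (eqVneq m i) => [emi|nmi].
  exfalso.
  pose c := fun k : nat => s * (k%:R - (n.+1)%:R * (i < k)%N%:R).
  have c0 : c 0%N = 0 by rewrite /c ltn0 /= mulr0 subr0 mulr0.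
  have cN : c n.+1 = 0 by rewrite /c ltn_ord mulr1 subrr mulr0.
  have cd : forall k : nat, c k - c k.+1 = s * ((n.+1)%:R * (nat_of_ord i == k)%:R - 1).
    by move=> k; rewrite /c ltS_R -[k.+1]addn1 natrD; ring.
  have hb : forall y, y \in cell_pts R lam i -> Lf c y <= 1.
    apply: cell_bound => // k ki; rewrite Lf_vvec // cd.
    have -> : (nat_of_ord i == nat_of_ord k) = false.
      by apply/negbTE; rewrite eq_sym.
    by rewrite mulr0; case: (lamR ki) => ->; case: hs => ->; lra.
  move: (conv_le hc hb); rewrite Lf_Z Lf_u // cd emi eqxx mulr1 mulrA.
  have -> : s * s = 1 by case: hs => ->; lra.
  rewrite mul1r -addn1 natrD addrK.
  have : (1 < n%:R :> R) by rewrite ltr1n.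
  move=> h1 h2; have := lt_le_trans h1 h2; by rewrite ltxx.
split => //.
suff key : s = - (lam m)%:~R -> False.
  case: (lamR nmi) => hl; case: hs => hs; rewrite hl hs //; exfalso; apply: key; rewrite hl hs //; lra.
move=> hsl.
pose c := fun k : nat => s * ((i < k)%N%:R - (m < k)%N%:R).
have c0 : c 0%N = 0 by rewrite /c !ltn0 /= subrr mulr0.
have cN : c n.+1 = 0 by rewrite /c !ltn_ord subrr mulr0.
have cd : forall k : nat, c k - c k.+1 = s * ((nat_of_ord m == k)%:R - (nat_of_ord i == k)%:R).
  by move=> k; rewrite /c !ltS_R; ring.
have hb : forall y, y \in cell_pts R lam i -> Lf c y <= 0.
  apply: cell_bound => // k ki; rewrite Lf_vvec // cd.
  have -> : (nat_of_ord i == nat_of_ord k) = false by apply/negbTE; rewrite eq_sym.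
  case: (eqVneq m k) => [<-|mk].
    rewrite eqxx hsl subr0 mulr1 mulrN.
    have : (lam m)%:~R * (lam m)%:~R = 1 :> R by case: (lamR nmi) => ->; lra.
    move: ((lam m)%:~R) => x; lra.
  have -> : (nat_of_ord m == nat_of_ord k) = false by apply/negbTE.
  by rewrite subrr !mulr0.
move: (conv_le hc hb); rewrite Lf_Z Lf_u // cd eqxx.
have -> : (nat_of_ord i == nat_of_ord m) = false by apply/negbTE; rewrite eq_sym.
rewrite hsl subr0 mulr1 mulrNN.
have : (lam m)%:~R * (lam m)%:~R = 1 :> R by case: (lamR nmi) => ->; lra.
move: ((lam m)%:~R) => x; lra.
Qed.

End Core.

Lemma modS_eq N x : (x < N)%N -> (x.+1 %% N = if x.+1 == N then 0 else x.+1)%N.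
Proof.
move=> h; case: eqP => [->|ne]; first by rewrite modnn.
by rewrite modn_small //; lia.
Qed.
Lemma no2 N a b : (2 < N)%N -> (a < N)%N -> (b < N)%N -> a = (b.+1 %% N)%N -> (a.+1 %% N)%N = b -> False.
Proof.
move=> hN ha hb; rewrite !modS_eq //.
case: eqP => e1; case: eqP => e2; lia.
Qed.

Lemma core (R : realFieldType) (n : nat) (hn : (2 <= n)%N)
  (lam : 'I_n.+1 -> int) (i : 'I_n.+1)
  (H : forall k, k != i -> lam k = 1 \/ lam k = -1) :
  exists E : {set 'I_n.+1 * 'I_n.+1},
    (forall p, p \in E <-> dir_edge_of (cell_pts R lam i) p) /\ #|E| = n.
Proof.
pose f := fun k : 'I_n.+1 => if lam k == 1 then (k, ordS k) else (ordS k, k).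
have m1 : (-1 == 1 :> int) = false by [].
have inS : forall k, k != i -> vvec R lam k \in cell_pts R lam i.
  move=> k ki; rewrite /cell_pts in_cons; apply/orP; right; apply/mapP.
  by exists k => //; rewrite mem_filter ki mem_enum.
exists [set f k | k in [set~ i]]; split.
- move=> [a b]; split.
  + case/imsetP => k; rewrite in_setC1 => ki e; rewrite e /f.
    have hk := ltn_ord k.
    case: (H k ki) => hl; rewrite hl ?eqxx ?m1; split; rewrite /cyc_adj /= ?eqxx ?orbT //;
      apply: mem_conv; rewrite evec_modS //; move: (inS k ki); rewrite /vvec hl.
      by rewrite mulr1z scale1r.
    by rewrite intrN mulr1z scaleN1r opprB.
  + case => /= /orP [/eqP hb|/eqP ha] hc.
    * have ha := ltn_ord a.
      move: hc; rewrite hb evec_modS // -(scale1r (_ - _)) -/(uvec R n a) => hc.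
      have [ai hl] := bad hn H (or_introl erefl) hc.
      have hl1 : lam a = 1.
        case: (H a ai) => // hl'; move: hl; rewrite hl' intrN mulr1z => hl.
        by exfalso; move: hl; lra.
      apply/imsetP; exists a; first by rewrite in_setC1.
      rewrite /f hl1 eqxx; congr pair; apply: val_inj; rewrite /= hb //.
    * have hb := ltn_ord b.
      move: hc; rewrite ha evec_modS // -opprB -scaleN1r -/(uvec R n b) => hc.
      have [bi hl] := bad hn H (or_intror erefl) hc.
      have hl1 : lam b = -1.
        case: (H b bi) => // hl'; move: hl; rewrite hl' mulr1z => hl.
        by exfalso; move: hl; lra.
      apply/imsetP; exists b; first by rewrite in_setC1.
      rewrite /f hl1 m1; congr pair; apply: val_inj; rewrite /= ha //.
- rewrite card_imset; first by rewrite cardsC1 card_ord.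
  move=> k1 k2; rewrite /f.
  case: (lam k1 == 1); case: (lam k2 == 1) => -[] //.
  + move=> e1 e2; apply: val_inj; move: e1 e2 => /(congr1 val) /= e1 /(congr1 val) /= e2.
    have h1 := ltn_ord k1; have h2 := ltn_ord k2.
    exfalso; move: e1 e2; rewrite /=; apply: no2 => //.
  + move=> e1 e2; apply: val_inj; move: e1 e2 => /(congr1 val) /= e1 /(congr1 val) /= e2.
    have h1 := ltn_ord k1; have h2 := ltn_ord k2.
    exfalso; move: e1 e2; rewrite /= => e1 e2; exact: (@no2 n.+1 k2 k1).
Qed.

Unset Implicit Arguments.

Theorem proposition9p3 (R : realFieldType) (n : nat) (hn : (2 <= n)%N)
  (S : seq 'rV[R]_n) :
  is_cell S ->
  exists E : {set 'I_n.+1 * 'I_n.+1},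
    (forall p, p \in E <-> dir_edge_of S p) /\ #|E| = n.
Proof.
rewrite /is_cell; case: ifP => _.
  move=> [lam [i [hl _ _ ->]]]; apply: core => // k _; exact: hl.
move=> [lam [j [_ hl _ ->]]]; exact: core.
Qed.
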